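(* Let $P$ be a program and let $\tau = \alpha \cdot \mathit{issue}(p,t) \cdot \beta \cdot \mathit{com}(p,t) \cdot \gamma$ be a minimal anomaly of $P$ such that $\mathit{issue}(p,t)$ happens before $\mathit{com}(p,t)$ through $\beta$. Then $\tau' = \alpha \cdot \mathit{issue}(p,t) \cdot \beta \cdot \mathit{com}(p,t)$ is also a minimal anomaly of $P$.
   Context: Programs: parallel compositions of processes, each a sequence of transactions (reads of shared variables into registers, writes of register expressions to shared variables, assume statements, delimited by begin and commit). Snapshot isolation (SI): a transaction reads/writes a local snapshot of the central memory taken at its begin and can commit (publishing its writes) only if no transaction committed after its begin wrote a variable it writes. Serializability: every transaction executes atomically. Traces: each transaction $t$ of process $p$ yields an issue event $\mathit{issue}(p,t)$ (begin, reads, local writes) and a commit event $\mathit{com}(p,t)$. Dependencies: $\mathsf{po}$ (program order), $\mathsf{rf}$ (write-read), $\mathsf{st}$ (store order between writes to the same variable), $\mathsf{cf}$ (conflict: a read does not see a write to the same variable that would affect it if visible), and issue-to-commit of the same transaction; $\mathsf{hb}^1$ is their union, $\mathsf{hb}$ its transitive closure. An anomaly of $P$ is a trace of an SI execution of $P$ that is not a trace of any serializable execution of $P$. ''$a$ happens before $b$ through $\beta$'' (in a trace $\alpha\cdot a\cdot\beta\cdot b\cdot\gamma$) means there is a nonempty subsequence $c_1\cdots c_n$ of $\beta$ with $c_i\to_{\mathsf{hb}^1}c_{i+1}$ for all $i\in[0,n]$, $c_0=a$, $c_{n+1}=b$. A transaction $t$ is delayed in a trace $\tau=\alpha\cdot\mathit{issue}(p,t)\cdot\beta\cdot\mathit{com}(p,t)\cdot\gamma$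 if $\mathit{issue}(p,t)$ happens before $\mathit{com}(p,t)$ through $\beta$. $\#(\tau)$ is the number of delayed transactions in $\tau$, and an anomaly is minimal if it has the least number of delayed transactions among all anomalies of $P$. *)

(* Defs.v *)
(* A small-step snapshot-isolation semantics for programs made of
   processes, each a sequence of transactions, following the paper's model where
   the begin, the reads and the local writes of a transaction form one atomic
   "issue" event and the commit is a separate event. *)
From Stdlib Require Import List Arith Bool ClassicalEpsilon.
From Stdlib Require Import Sorting.Sorted.
Import ListNotations.

Definition var := nat.
Definition reg := nat.
Definition val := nat.
Definition pid := nat.   (* a process = its index in the program *)
Definition tid := nat.   (* a transaction = its index in its process *)

Definition regs := reg -> val.

(* Instructions inside a transaction (begin/commit delimiters are implicit):
   r := x ; x := e(registers) ; assume c(registers). *)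
Inductive instr :=
| IRead (r : reg) (x : var)
| IWrite (x : var) (e : regs -> val)
| IAssume (c : regs -> bool).

Definition txn := list instr.
Definition process := list txn.
Definition program := list process.

Inductive event :=
| Issue (p : pid) (t : tid)
| Com (p : pid) (t : tid).

Definition upd {A} (f : nat -> A) (n : nat) (v : A) : nat -> A :=
  fun m => if Nat.eqb m n then v else f m.

Fixpoint lookup (x : var) (l : list (var * val)) : option val :=
  match l with
  | [] => None
  | (y, v) :: l' => if Nat.eqb x y then Some v else lookup x l'
  end.

(* Returns the new
   registers, the local write buffer (most recent first) and the list of
   variables read from the snapshot (reads not preceded by a local write to the
   same variable).  [None] = blocked by a failing assume. *)
Fixpoint run_body (snap : var -> val) (rs : regs) (lw : list (var * val))
         (rd : list var) (b : txn) : option (regs * list (var * val) * list var) :=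
  match b with
  | [] => Some (rs, lw, rd)
  | IRead r x :: b' =>
      match lookup x lw with
      | Some v => run_body snap (upd rs r v) lw rd b'
      | None => run_body snap (upd rs r (snap x)) lw (x :: rd) b'
      end
  | IWrite x e :: b' => run_body snap rs ((x, e rs) :: lw) rd b'
  | IAssume c :: b' => if c rs then run_body snap rs lw rd b' else None
  end.

Record pend := mkPend {
  pd_t : tid;
  pd_wr : list (var * val);
  pd_start : nat                 (* length of the commit log at its issue *)
}.

Record state := mkState {
  mem : var -> val * option (pid * tid);  (* central memory: value and last writer *)
  rgs : pid -> regs;
  pc : pid -> tid;                         (* next transaction of each process *)
  pending : pid -> option pend;
  clog : list (list var)                   (* variables written by each commit, in commit order *)
}.

Definition init_state : state :=
  mkState (fun _ => (0, None)) (fun _ _ => 0) (fun _ => 0) (fun _ => None) [].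

Definition issue_info (P : program) (s : state) (p : pid) (t : tid)
  : option (regs * list (var * val) * list var) :=
  match nth_error P p with
  | None => None
  | Some pr =>
      match nth_error pr t with
      | None => None
      | Some body => run_body (fun x => fst (mem s x)) (rgs s p) [] [] body
      end
  end.

Definition no_conflict (wr : list (var * val)) (later : list (list var)) : bool :=
  forallb (fun ws => negb (existsb (fun x => existsb (Nat.eqb x) ws) (map fst wr))) later.

Definition step (P : program) (s : state) (e : event) : option state :=
  match e with
  | Issue p t =>
      match pending s p with
      | Some _ => None
      | None =>
          if Nat.eqb (pc s p) t then
            match issue_info P s p t with
            | None => None
            | Some (rs, wr, _) =>
                Some (mkState (mem s) (upd (rgs s) p rs) (pc s)
                        (upd (pending s) p (Some (mkPend t wr (length (clog s)))))
                        (clog s))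
            end
          else None
      end
  | Com p t =>
      match pending s p with
      | None => None
      | Some pd =>
          if Nat.eqb (pd_t pd) t && no_conflict (pd_wr pd) (skipn (pd_start pd) (clog s))
          then
            Some (mkState
                    (fun x => match lookup x (pd_wr pd) with
                              | Some v => (v, Some (p, t))
                              | None => mem s x
                              end)
                    (rgs s) (upd (pc s) p (S t)) (upd (pending s) p None)
                    (clog s ++ [map fst (pd_wr pd)]))
          else None
      end
  end.

Definition replay (P : program) (rho : list event) : option state :=
  fold_left (fun os e => match os with Some s => step P s e | None => None end)
            rho (Some init_state).

Definition exec_SI (P : program) (rho : list event) : Prop := replay P rho <> None.

(* Serializability: every transaction executes atomically, i.e. each issue event
   whose commit occurs is immediately followed by that commit. *)
Definition serial (rho : list event) : Prop :=
  forall a b p t, rho = a ++ Issue p t :: b -> In (Com p t) b ->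
    exists b', b = Com p t :: b'.

Definition exec_SER (P : program) (rho : list event) : Prop :=
  exec_SI P rho /\ serial rho.

(* transaction (p,t) reads x from its snapshot, and that snapshot value was
   written by w (None = initial value) *)
Definition reads_from (P : program) (rho : list event) (p : pid) (t : tid)
           (x : var) (w : option (pid * tid)) : Prop :=
  exists a b s rs wr rd, rho = a ++ Issue p t :: b /\ replay P a = Some s /\
    issue_info P s p t = Some (rs, wr, rd) /\ In x rd /\ snd (mem s x) = w.

Definition reads (P : program) (rho : list event) (p : pid) (t : tid) (x : var) : Prop :=
  exists w, reads_from P rho p t x w.

Definition writes (P : program) (rho : list event) (p : pid) (t : tid) (x : var) : Prop :=
  exists a b s rs wr rd, rho = a ++ Issue p t :: b /\ replay P a = Some s /\
    issue_info P s p t = Some (rs, wr, rd) /\ In x (map fst wr).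

Definition before (rho : list event) (e1 e2 : event) : Prop :=
  exists a b, rho = a ++ e1 :: b /\ In e2 b.

Definition ev_pid (e : event) : pid := match e with Issue p _ | Com p _ => p end.
Definition ev_tid (e : event) : tid := match e with Issue _ t | Com _ t => t end.

Definition po (rho : list event) (e1 e2 : event) : Prop :=
  In e1 rho /\ In e2 rho /\ ev_pid e1 = ev_pid e2 /\ ev_tid e1 < ev_tid e2.

Definition rf (P : program) (rho : list event) (e1 e2 : event) : Prop :=
  exists p1 t1 p2 t2 x, e1 = Com p1 t1 /\ e2 = Issue p2 t2 /\ In e1 rho /\
    reads_from P rho p2 t2 x (Some (p1, t1)).

Definition st (P : program) (rho : list event) (e1 e2 : event) : Prop :=
  exists p1 t1 p2 t2 x, e1 = Com p1 t1 /\ e2 = Com p2 t2 /\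
    writes P rho p1 t1 x /\ writes P rho p2 t2 x /\ before rho e1 e2.

(* a snapshot read of x in (p1,t1) does not see the write to x of (p2,t2),
   committed after the issue of (p1,t1) *)
Definition cf (P : program) (rho : list event) (e1 e2 : event) : Prop :=
  exists p1 t1 p2 t2 x, e1 = Issue p1 t1 /\ e2 = Com p2 t2 /\ (p1, t1) <> (p2, t2) /\
    reads P rho p1 t1 x /\ writes P rho p2 t2 x /\ before rho e1 e2.

Definition itc (rho : list event) (e1 e2 : event) : Prop :=
  exists p t, e1 = Issue p t /\ e2 = Com p t /\ In e1 rho /\ In e2 rho.

Definition hb1 (P : program) (rho : list event) (e1 e2 : event) : Prop :=
  po rho e1 e2 \/ rf P rho e1 e2 \/ st P rho e1 e2 \/ cf P rho e1 e2 \/ itc rho e1 e2.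

Definition same_trace (P : program) (r1 r2 : list event) : Prop :=
  (forall e, In e r1 <-> In e r2) /\
  (forall e1 e2, po r1 e1 e2 <-> po r2 e1 e2) /\
  (forall e1 e2, rf P r1 e1 e2 <-> rf P r2 e1 e2) /\
  (forall e1 e2, st P r1 e1 e2 <-> st P r2 e1 e2) /\
  (forall e1 e2, cf P r1 e1 e2 <-> cf P r2 e1 e2).

Definition anomaly (P : program) (tau : list event) : Prop :=
  exec_SI P tau /\ ~ (exists rho, exec_SER P rho /\ same_trace P tau rho).

Inductive subseq {A} : list A -> list A -> Prop :=
| subseq_nil : subseq [] []
| subseq_keep x l1 l2 : subseq l1 l2 -> subseq (x :: l1) (x :: l2)
| subseq_skip x l1 l2 : subseq l1 l2 -> subseq l1 (x :: l2).

Definition hb_through (P : program) (tau : list event) (a : event)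
           (beta : list event) (b : event) : Prop :=
  exists cs, cs <> [] /\ subseq cs beta /\ LocallySorted (hb1 P tau) (a :: cs ++ [b]).

Definition delayed (P : program) (tau : list event) (pt : pid * tid) : Prop :=
  exists a b g, tau = a ++ Issue (fst pt) (snd pt) :: b ++ Com (fst pt) (snd pt) :: g /\
    hb_through P tau (Issue (fst pt) (snd pt)) b (Com (fst pt) (snd pt)).

Definition pt_eq_dec : forall x y : pid * tid, {x = y} + {x <> y}.
Proof. decide equality; apply Nat.eq_dec. Defined.

Definition issued (tau : list event) : list (pid * tid) :=
  nodup pt_eq_dec
    (flat_map (fun e => match e with Issue p t => [(p, t)] | Com _ _ => [] end) tau).

Definition ndelayed (P : program) (tau : list event) : nat :=
  length (filter (fun pt => if excluded_middle_informative (delayed P tau pt)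
                            then true else false) (issued tau)).

Definition minimal_anomaly (P : program) (tau : list event) : Prop :=
  anomaly P tau /\ forall tau', anomaly P tau' -> ndelayed P tau <= ndelayed P tau'.

(* Main.v *)
Require Import Defs.
From Stdlib Require Import List Arith Lia Sorting.Sorted ClassicalEpsilon.
Import ListNotations.

Lemma nodup_disj {A} (X Y : list A) z : NoDup (X ++ Y) -> In z X -> In z Y -> False.
Proof.
  induction X as [|x X IH]; simpl; intros H HX HY; [easy|].
  inversion H; subst. destruct HX as [<-|HX]; [|eauto].
  apply H2. apply in_app_iff; auto.
Qed.

Lemma nodup_split_uniq {A} (a b a' b' : list A) x :
  NoDup (a ++ x :: b) -> a ++ x :: b = a' ++ x :: b' -> a = a' /\ b = b'.
Proof.
  revert a'. induction a as [|y a IH]; intros a' Hn He; destruct a' as [|y' a']; simpl in *.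
  - injection He; auto.
  - injection He; intros E1 E2. subst y'. apply NoDup_cons_iff in Hn as [Hn1 Hn2].
    exfalso; apply Hn1. rewrite E1. apply in_app_iff; simpl; auto.
  - injection He; intros E1 E2. subst y. apply NoDup_cons_iff in Hn as [Hn1 Hn2].
    exfalso; apply Hn1. apply in_app_iff; simpl; auto.
  - injection He; intros E1 E2. subst y'. apply NoDup_cons_iff in Hn as [Hn1 Hn2].
    destruct (IH a' Hn2 E1); subst; auto.
Qed.

Lemma nodup_snoc {A} (l : list A) x : NoDup l -> ~ In x l -> NoDup (l ++ [x]).
Proof.
  intros H1 H2. apply NoDup_app; auto. constructor; [easy|constructor].
  intros a Ha [<-|[]]; auto.
Qed.

Section S.
Variable P : program.

Lemma replay_snoc l e : replay P (l ++ [e]) =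
  match replay P l with Some s => step P s e | None => None end.
Proof. unfold replay. rewrite fold_left_app. reflexivity. Qed.

Lemma fold_none l : fold_left (fun os e => match os with Some s => step P s e | None => None end) l None = None.
Proof. induction l; simpl; auto. Qed.

Lemma replay_app_none l1 l2 : replay P l1 = None -> replay P (l1 ++ l2) = None.
Proof. unfold replay. rewrite fold_left_app. intros ->. apply fold_none. Qed.

Lemma replay_prefix l1 l2 : replay P (l1 ++ l2) <> None -> exists s, replay P l1 = Some s.
Proof.
  intros H. destruct (replay P l1) eqn:E; eauto. exfalso; apply H; now apply replay_app_none.
Qed.

Lemma step_at a e b : replay P (a ++ e :: b) <> None ->
  exists s s', replay P a = Some s /\ step P s e = Some s' /\ replay P (a ++ [e]) = Some s'.
Proof.
  intros H. replace (a ++ e :: b) with ((a ++ [e]) ++ b) in H by (rewrite <- app_assoc; reflexivity).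
  destruct (replay_prefix _ _ H) as [s' Hs']. rewrite replay_snoc in Hs'.
  destruct (replay P a) as [s|] eqn:Ea; [|discriminate]. exists s, s'. rewrite replay_snoc, Ea. auto.
Qed.

Definition Inv (l : list event) (s : state) : Prop :=
 (forall p pd, pending s p = Some pd -> pd_t pd = pc s p /\ In (Issue p (pd_t pd)) l) /\
 (forall p t, In (Issue p t) l -> t < pc s p \/ (t = pc s p /\ pending s p <> None)) /\
 (forall p t, In (Com p t) l -> t < pc s p) /\
 (forall x p t, snd (mem s x) = Some (p,t) -> In (Com p t) l) /\
 NoDup l.

Lemma Inv_init : Inv [] init_state.
Proof. repeat split; simpl; try easy. constructor. Qed.

Lemma Inv_step l s e s' : Inv l s -> step P s e = Some s' ->
  Inv (l ++ [e]) s' /\ ev_tid e = pc s (ev_pid e) /\ (forall q, pc s q <= pc s' q) /\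
  ev_tid e <= pc s' (ev_pid e) /\ (forall p t, e = Com p t -> In (Issue p t) l).
Proof.
  intros [I1 [I2 [I3 [I4 I5]]]] H. destruct e as [p t|p t]; simpl in H.
  - destruct (pending s p) eqn:Hp; [discriminate|].
    destruct (Nat.eqb_spec (pc s p) t); [|discriminate]. subst t.
    destruct (issue_info P s p (pc s p)) as [[[rs wr] rd]|]; [|discriminate].
    injection H; intros <-. simpl. split; [|repeat split; auto; congruence].
    refine (conj _ (conj _ (conj _ (conj _ _)))); simpl.
    + intros q pd0. unfold upd. destruct (Nat.eqb_spec q p).
      * intros E; injection E; intros <-; simpl; subst; split; auto. apply in_app_iff; simpl; auto.
      * intros E; destruct (I1 _ _ E); split; auto. apply in_app_iff; auto.
    + intros q t'. rewrite in_app_iff; simpl. unfold upd. intros [Hin|[E|[]]].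
      * destruct (Nat.eqb_spec q p); [subst|now apply I2].
        destruct (I2 _ _ Hin) as [Hl|[_ Hn]]; [left; auto|congruence].
      * injection E; intros; subst. rewrite Nat.eqb_refl. right; split; congruence.
    + intros q t'. rewrite in_app_iff; simpl. intros [Hin|[E|[]]]; [now apply I3|discriminate].
    + intros x q t' Hm. apply in_app_iff; left; eauto.
    + apply nodup_snoc; auto. intros Hin. destruct (I2 _ _ Hin) as [Hl|[_ Hn]]; [lia|congruence].
  - destruct (pending s p) as [pd|] eqn:Hp; [|discriminate].
    destruct (Nat.eqb_spec (pd_t pd) t); [|discriminate]. simpl in H.
    destruct (no_conflict _ _); [|discriminate]. subst t.
    destruct (I1 _ _ Hp) as [Ept HinI].
    injection H; intros <-. simpl.
    split; [|split; [auto|split; [|split]]].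
    + refine (conj _ (conj _ (conj _ (conj _ _)))); simpl.
      * intros q pd'. unfold upd. destruct (Nat.eqb_spec q p); [discriminate|].
        intros E; destruct (I1 _ _ E); split; auto. apply in_app_iff; auto.
      * intros q t'. rewrite in_app_iff; simpl. unfold upd. intros [Hin|[E|[]]]; [|discriminate].
        destruct (Nat.eqb_spec q p); [subst|now apply I2].
        destruct (I2 _ _ Hin) as [Hl|[E _]]; left; lia.
      * intros q t'. rewrite in_app_iff; simpl. unfold upd. intros [Hin|[E|[]]].
        -- specialize (I3 _ _ Hin). destruct (Nat.eqb_spec q p); [subst|]; lia.
        -- injection E; intros; subst. rewrite Nat.eqb_refl. lia.
      * intros x q t'. destruct (lookup x (pd_wr pd)).
        -- simpl. intros E; injection E; intros; subst. apply in_app_iff; simpl; auto.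
        -- intros Hm. apply in_app_iff; left; eauto.
      * apply nodup_snoc; auto. intros Hin. specialize (I3 _ _ Hin). lia.
    + intros q. unfold upd. destruct (Nat.eqb_spec q p); subst; lia.
    + unfold upd. rewrite Nat.eqb_refl. lia.
    + intros p0 t0 E. injection E; intros; subst p0 t0. exact HinI.
Qed.

Lemma Inv_replay l : forall s, replay P l = Some s -> Inv l s.
Proof.
  induction l as [|e l IH] using rev_ind; intros s H.
  - unfold replay in H; simpl in H. injection H; intros <-. apply Inv_init.
  - rewrite replay_snoc in H. destruct (replay P l) as [s0|] eqn:E; [|discriminate].
    apply (Inv_step _ s0 e); auto.
Qed.

Lemma pc_mono a l s1 s2 q : replay P a = Some s1 -> replay P (a ++ l) = Some s2 -> pc s1 q <= pc s2 q.
Proof.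
  revert s2. induction l as [|e l IH] using rev_ind; intros s2 H1 H2.
  - rewrite app_nil_r in H2. rewrite H1 in H2. injection H2; intros <-; auto.
  - rewrite app_assoc, replay_snoc in H2. destruct (replay P (a ++ l)) as [s0|] eqn:E; [|discriminate].
    specialize (IH s0 H1 eq_refl).
    destruct (Inv_step _ _ _ _ (Inv_replay _ _ E) H2) as [_ [_ [M _]]]. specialize (M q). lia.
Qed.

Lemma SI_nodup rho : replay P rho <> None -> NoDup rho.
Proof.
  intros H. destruct (replay P rho) eqn:E; [|congruence]. apply (Inv_replay _ _ E).
Qed.

End S.
Section T.
Variable P : program.

Lemma before_in rho x y : before rho x y -> In x rho /\ In y rho.
Proof.
  intros [a [b [-> H]]]. split; apply in_app_iff; simpl; auto.
Qed.

Lemma com_issue rho p t : replay P rho <> None -> In (Com p t) rho -> before rho (Issue p t) (Com p t).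
Proof.
  intros H Hin. destruct (in_split _ _ Hin) as [a [b ->]].
  destruct (step_at P _ _ _ H) as [s [s' [Hs [Hst _]]]].
  destruct (Inv_step P _ _ _ _ (Inv_replay P _ _ Hs) Hst) as [_ [_ [_ [_ Hi]]]].
  specialize (Hi p t eq_refl). destruct (in_split _ _ Hi) as [a1 [a2 ->]].
  exists a1, (a2 ++ Com p t :: b). split; [rewrite <- app_assoc; reflexivity|].
  apply in_app_iff; simpl; auto.
Qed.

Lemma before_trans rho x y z : NoDup rho -> before rho x y -> before rho y z -> before rho x z.
Proof.
  intros N [a1 [b1 [E1 Hy]]] [a2 [b2 [E2 Hz]]].
  destruct (in_split _ _ Hy) as [c [d Eb]]. subst b1.
  assert (E3 : rho = (a1 ++ x :: c) ++ y :: d) by (rewrite E1, <- app_assoc; reflexivity).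
  rewrite E3 in N. rewrite E3 in E2.
  destruct (nodup_split_uniq _ _ _ _ _ N E2) as [_ E4]. subst d.
  exists a1, (c ++ y :: b2). split; auto. apply in_app_iff; simpl; auto.
Qed.

Lemma before_irrefl rho x : NoDup rho -> before rho x x -> False.
Proof.
  intros N [a [b [-> H]]]. apply NoDup_remove_2 in N. apply N. apply in_app_iff; auto.
Qed.

Lemma before_antisym rho x y : NoDup rho -> before rho x y -> before rho y x -> False.
Proof. intros N H1 H2. apply (before_irrefl rho x N). eapply before_trans; eauto. Qed.

Lemma in_before rho a b x y : rho = a ++ y :: b -> In x a -> before rho x y.
Proof.
  intros -> H. destruct (in_split _ _ H) as [a1 [a2 ->]].
  exists a1, (a2 ++ y :: b). split; [rewrite <- app_assoc; reflexivity|].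
  apply in_app_iff; simpl; auto.
Qed.

Lemma po_before rho e1 e2 : replay P rho <> None -> po rho e1 e2 -> before rho e1 e2.
Proof.
  intros H [H1 [H2 [Hp Ht]]]. destruct (in_split _ _ H2) as [a2 [b2 E]].
  rewrite E in H1. apply in_app_iff in H1. destruct H1 as [H1|[H1|H1]].
  - eapply in_before; eauto.
  - subst; lia.
  - exfalso. destruct (in_split _ _ H1) as [c [d Eb]]. subst b2. rewrite E in H.
    destruct (step_at P _ _ _ H) as [s2 [s2' [Hs2 [Hst2 Hs2']]]].
    destruct (Inv_step P _ _ _ _ (Inv_replay P _ _ Hs2) Hst2) as [_ [_ [_ [T2 _]]]].
    replace (a2 ++ e2 :: c ++ e1 :: d) with ((a2 ++ e2 :: c) ++ e1 :: d) in H
      by (rewrite <- app_assoc; reflexivity).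
    destruct (step_at P _ _ _ H) as [s1 [s1' [Hs1 [Hst1 _]]]].
    destruct (Inv_step P _ _ _ _ (Inv_replay P _ _ Hs1) Hst1) as [_ [T1 _]].
    assert (M := pc_mono P (a2 ++ [e2]) c s2' s1 (ev_pid e2) Hs2').
    rewrite <- app_assoc in M. simpl in M. specialize (M Hs1).
    rewrite Hp in T1. lia.
Qed.

Lemma hb1_before rho e1 e2 : replay P rho <> None -> hb1 P rho e1 e2 -> before rho e1 e2.
Proof.
  intros H [Hh|[Hh|[Hh|[Hh|Hh]]]].
  - now apply po_before.
  - destruct Hh as [p1 [t1 [p2 [t2 [x [-> [-> [Hin [a [b [s [rs [wr [rd [E [Hs [_ [_ Hw]]]]]]]]]]]]]]]]]].
    destruct (Inv_replay P _ _ Hs) as [_ [_ [_ [I4 _]]]].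
    eapply in_before; eauto.
  - destruct Hh as [p1 [t1 [p2 [t2 [x [_ [_ [_ [_ Hb]]]]]]]]]; auto.
  - destruct Hh as [p1 [t1 [p2 [t2 [x [_ [_ [_ [_ [_ Hb]]]]]]]]]]; auto.
  - destruct Hh as [p [t [-> [-> [_ Hin]]]]]. now apply com_issue.
Qed.

Lemma split_restrict (tau' g a : list event) e b : NoDup (tau' ++ g) -> In e tau' -> tau' ++ g = a ++ e :: b ->
  exists b', tau' = a ++ e :: b' /\ b = b' ++ g.
Proof.
  intros N Hin E. destruct (in_split _ _ Hin) as [a' [b'' E']]. subst tau'.
  rewrite <- app_assoc in N, E. simpl in N, E.
  destruct (nodup_split_uniq _ _ _ _ _ N E) as [-> <-]. eauto.
Qed.

Lemma reads_from_restrict tau' g p t x w : NoDup (tau' ++ g) -> In (Issue p t) tau' ->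
  reads_from P (tau' ++ g) p t x w -> reads_from P tau' p t x w.
Proof.
  intros N Hin [a [b [s [rs [wr [rd [E R]]]]]]].
  destruct (split_restrict _ _ _ _ _ N Hin E) as [b' [E' _]].
  exists a, b', s, rs, wr, rd. auto.
Qed.

Lemma writes_restrict tau' g p t x : NoDup (tau' ++ g) -> In (Issue p t) tau' ->
  writes P (tau' ++ g) p t x -> writes P tau' p t x.
Proof.
  intros N Hin [a [b [s [rs [wr [rd [E R]]]]]]].
  destruct (split_restrict _ _ _ _ _ N Hin E) as [b' [E' _]].
  exists a, b', s, rs, wr, rd. auto.
Qed.

Lemma before_restrict tau' g x y : NoDup (tau' ++ g) -> In x tau' -> In y tau' ->
  before (tau' ++ g) x y -> before tau' x y.
Proof.
  intros N Hx Hy [a [b [E Hb]]].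
  destruct (split_restrict _ _ _ _ _ N Hx E) as [b' [E' ->]].
  exists a, b'. split; auto. apply in_app_iff in Hb. destruct Hb as [Hb|Hb]; auto.
  exfalso. eapply nodup_disj; eauto.
Qed.

Lemma hb1_restrict tau' g x y : replay P (tau' ++ g) <> None -> In x tau' -> In y tau' ->
  hb1 P (tau' ++ g) x y -> hb1 P tau' x y.
Proof.
  intros H Hx Hy Hh. assert (N := SI_nodup P _ H).
  assert (H' : replay P tau' <> None).
  { destruct (replay_prefix P _ _ H) as [s Hs]. congruence. }
  assert (CI : forall p t, In (Com p t) tau' -> In (Issue p t) tau').
  { intros p t Hc. apply (before_in tau' _ (Com p t)). now apply com_issue. }
  destruct Hh as [Hh|[Hh|[Hh|[Hh|Hh]]]].
  - left. destruct Hh as [_ [_ [R1 R2]]]. repeat split; auto.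
  - right; left. destruct Hh as [p1 [t1 [p2 [t2 [z [E1 [E2 [_ R]]]]]]]].
    subst. exists p1, t1, p2, t2, z. repeat split; auto.
    eapply reads_from_restrict; eauto.
  - right; right; left. destruct Hh as [p1 [t1 [p2 [t2 [z [E1 [E2 [W1 [W2 B]]]]]]]]].
    subst. exists p1, t1, p2, t2, z. repeat split.
    + eapply writes_restrict; eauto.
    + eapply writes_restrict; eauto.
    + eapply before_restrict; eauto.
  - right; right; right; left. destruct Hh as [p1 [t1 [p2 [t2 [z [E1 [E2 [Ne [[w R] [W2 B]]]]]]]]]].
    subst. exists p1, t1, p2, t2, z. repeat split; auto.
    + exists w. eapply reads_from_restrict; eauto.
    + eapply writes_restrict; eauto.
    + eapply before_restrict; eauto.
  - right; right; right; right. destruct Hh as [p [t [E1 [E2 _]]]]. exists p, t; auto.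
Qed.

Lemma hb1_extend tau' g x y : hb1 P tau' x y -> hb1 P (tau' ++ g) x y.
Proof.
  assert (IE : forall e, In e tau' -> In e (tau' ++ g)) by (intros; apply in_app_iff; auto).
  assert (RF : forall p t z w, reads_from P tau' p t z w -> reads_from P (tau' ++ g) p t z w).
  { intros p t z w [a [b [s [rs [wr [rd [E R]]]]]]]. exists a, (b ++ g), s, rs, wr, rd.
    subst; rewrite <- app_assoc; auto. }
  assert (WR : forall p t z, writes P tau' p t z -> writes P (tau' ++ g) p t z).
  { intros p t z [a [b [s [rs [wr [rd [E R]]]]]]]. exists a, (b ++ g), s, rs, wr, rd.
    subst; rewrite <- app_assoc; auto. }
  assert (BE : forall e1 e2, before tau' e1 e2 -> before (tau' ++ g) e1 e2).
  { intros e1 e2 [a [b [E B]]]. exists a, (b ++ g). subst; rewrite <- app_assoc; split; auto.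
    apply in_app_iff; auto. }
  intros [Hh|[Hh|[Hh|[Hh|Hh]]]].
  - left. destruct Hh as [A [B [C D]]]. repeat split; auto.
  - right; left. destruct Hh as [p1 [t1 [p2 [t2 [z [E1 [E2 [I R]]]]]]]].
    exists p1, t1, p2, t2, z. repeat split; auto.
  - right; right; left. destruct Hh as [p1 [t1 [p2 [t2 [z [E1 [E2 [W1 [W2 B]]]]]]]]].
    exists p1, t1, p2, t2, z. repeat split; auto.
  - right; right; right; left. destruct Hh as [p1 [t1 [p2 [t2 [z [E1 [E2 [Ne [[w R] [W2 B]]]]]]]]]].
    exists p1, t1, p2, t2, z. repeat split; eauto. exists w; auto.
  - right; right; right; right. destruct Hh as [p [t [E1 [E2 [I1 I2]]]]]. exists p, t; auto.
Qed.

End T.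
Lemma LS_mono (R T : event -> event -> Prop) l :
  (forall x y, In x l -> In y l -> R x y -> T x y) -> LocallySorted R l -> LocallySorted T l.
Proof.
  intros Himp H. induction H.
  - constructor.
  - constructor.
  - constructor.
    + apply IHLocallySorted. intros x y Hx Hy. apply Himp; simpl; auto.
    + apply Himp; simpl; auto.
Qed.

Lemma chain (T : event -> event -> Prop) (Ht : forall x y z, T x y -> T y z -> T x z) l :
  forall a b, LocallySorted T (a :: l ++ [b]) -> T a b.
Proof.
  induction l as [|c l IH]; intros a b H; simpl in H.
  - inversion H; auto.
  - inversion H; subst. eapply Ht; eauto.
Qed.

Lemma subseq_in {A} (cs l : list A) x : subseq cs l -> In x cs -> In x l.
Proof. intros H; induction H; simpl; intuition. Qed.

Lemma hb1_same P r1 r2 x y : same_trace P r1 r2 -> hb1 P r1 x y -> hb1 P r2 x y.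
Proof.
  intros [HI [Hpo [Hrf [Hst Hcf]]]] [H|[H|[H|[H|H]]]].
  - left; now apply Hpo.
  - right; left; now apply Hrf.
  - right; right; left; now apply Hst.
  - right; right; right; left; now apply Hcf.
  - right; right; right; right. destruct H as [p [t [E1 [E2 [I1 I2]]]]].
    exists p, t. repeat split; auto; apply HI; auto.
Qed.

Lemma delayed_extend P tau' g pt : delayed P tau' pt -> delayed P (tau' ++ g) pt.
Proof.
  intros [a [b [g0 [E [cs [Hne [Hs HL]]]]]]].
  exists a, b, (g0 ++ g). split.
  - subst. rewrite <- app_assoc. simpl. rewrite <- app_assoc. reflexivity.
  - exists cs. split; auto. split; auto. eapply LS_mono; [|exact HL].
    intros x y _ _. apply hb1_extend.
Qed.

Lemma count_le (f g : pid * tid -> bool) L1 L2 : incl L1 L2 -> (forall x, f x = true -> g x = true) ->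
  length (filter f (nodup pt_eq_dec L1)) <= length (filter g (nodup pt_eq_dec L2)).
Proof.
  intros Hi Hfg. apply NoDup_incl_length.
  - apply NoDup_filter, NoDup_nodup.
  - intros x Hx. apply filter_In in Hx as [Hx Hf]. apply filter_In. split; auto.
    apply nodup_In. apply Hi. apply nodup_In in Hx. auto.
Qed.

Lemma ndelayed_prefix P tau' g : ndelayed P tau' <= ndelayed P (tau' ++ g).
Proof.
  unfold ndelayed, issued. apply count_le.
  - intros x Hx. rewrite flat_map_app. apply in_app_iff; auto.
  - intros x. destruct (excluded_middle_informative (delayed P tau' x)) as [D|D]; [|discriminate].
    destruct (excluded_middle_informative (delayed P (tau' ++ g) x)) as [D'|D']; auto.
    exfalso; apply D'. now apply delayed_extend.
Qed.

Theorem lemma2 (P : program) (alpha beta gamma : list event) (p : pid) (t : tid) :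
  minimal_anomaly P (alpha ++ Issue p t :: beta ++ Com p t :: gamma) ->
  hb_through P (alpha ++ Issue p t :: beta ++ Com p t :: gamma) (Issue p t) beta (Com p t) ->
  minimal_anomaly P (alpha ++ Issue p t :: beta ++ [Com p t]).
Proof.
  intros [[HSI Hns] Hmin] Hhb.
  assert (Etau : alpha ++ Issue p t :: beta ++ Com p t :: gamma
                 = (alpha ++ Issue p t :: beta ++ [Com p t]) ++ gamma).
  { rewrite <- app_assoc. simpl. rewrite <- app_assoc. reflexivity. }
  set (tau' := alpha ++ Issue p t :: beta ++ [Com p t]) in *.
  rewrite Etau in HSI, Hns, Hmin, Hhb.
  assert (HSI' : exec_SI P tau').
  { unfold exec_SI in *. destruct (replay_prefix P _ _ HSI) as [s Hs]. congruence. }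
  assert (Hle : ndelayed P tau' <= ndelayed P (tau' ++ gamma)) by apply ndelayed_prefix.
  assert (Han : anomaly P tau').
  { split; auto. intros [rho [[Hrho Hser] Htr]].
    destruct Hhb as [cs [Hne [Hsub HLS]]].
    assert (Hin : forall x, In x (Issue p t :: cs ++ [Com p t]) -> In x tau').
    { intros x Hx. unfold tau'. simpl in Hx. destruct Hx as [<-|Hx].
      - apply in_app_iff; simpl; auto.
      - apply in_app_iff in Hx. apply in_app_iff; right; simpl; right.
        apply in_app_iff. destruct Hx as [Hx|Hx]; [left; eapply subseq_in; eauto|right; auto]. }
    assert (HL : LocallySorted (before rho) (Issue p t :: cs ++ [Com p t])).
    { eapply LS_mono; [|exact HLS]. intros x y Hx Hy Hh.
      apply (hb1_before P); auto. eapply hb1_same; eauto.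
      eapply hb1_restrict; eauto. }
    assert (N := SI_nodup P _ Hrho).
    destruct cs as [|c1 cs']; [congruence|]. simpl in HL.
    inversion HL as [| |? ? ? HL2 B1]; subst.
    assert (B2 : before rho c1 (Com p t)).
    { eapply (chain (before rho)); [|exact HL2]. intros; eapply before_trans; eauto. }
    assert (B3 := before_trans _ _ _ _ N B1 B2).
    destruct B3 as [a' [b' [E' Hc]]].
    destruct (Hser a' b' p t E' Hc) as [b'' Eb]. subst b'.
    destruct B1 as [a [b [E Hc1]]].
    rewrite E' in E, N. destruct (nodup_split_uniq _ _ _ _ _ N E) as [_ <-].
    rewrite <- E' in N.
    destruct Hc1 as [<-|Hc1].
    - eapply before_irrefl; eauto.
    - eapply before_antisym; [exact N|exact B2|].
      exists (a' ++ [Issue p t]), b''. split; auto. rewrite E', <- app_assoc. reflexivity. }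
  split; auto. intros t'' H''. specialize (Hmin t'' H''). lia.
Qed.
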